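(* Let $q$ be a prime power and $n,d$ integers with $n\ge 2d\ge 2$, and assume $(n,q)\neq(2d,2)$. Then for all $0\le i\le d$ and $0\le j\le d$, $$|T_{h_{\max}}(i,j)|-|T_{h_{\max}-1}(i,j)|\le |G_j(i)|\le |T_{h_{\max}}(i,j)|,$$ where $h_{\max}=h_{\max}(i,j)=\min\{i,d-j\}$.
   Context: For integers $m\ge 0$ and $l$, the Gaussian coefficient is ${m\brack l}=\prod_{t=1}^{l}\frac{q^{m-t+1}-1}{q^t-1}$ for $l\ge 0$ (this is $0$ if $l>m$) and ${m\brack l}=0$ for $l<0$. For $0\le i,j\le d$ define $$G_j(i)=\sum_{h=\max\{0,i-j\}}^{\min\{i,d-j\}}(-1)^{i-h}q^{j(j-i+h)+\binom{i-h}{2}}{i\brack h}{d-h\brack j}{n-d-i+h\brack n-d-j};$$ these are the eigenvalues of the Grassmann graph $G_q(n,d,j)$ (vertices: $d$-dimensional subspaces of $\mathbb F_q^n$, two adjacent iff their intersection has dimension $d-j$). For $\max\{0,i-j\}\le h\le \min\{i,d-j\}$, $T_h(i,j)$ denotes the $h$-th summand above; for all other integers $h$ (in particular $h=-1$) set $T_h(i,j)=0$. *)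

(* Defs.v *)
From mathcomp Require Import all_boot all_order all_algebra.
Set Implicit Arguments. Unset Strict Implicit. Unset Printing Implicit Defensive.
Import Order.TTheory GRing.Theory Num.Theory.
Local Open Scope ring_scope.

Definition prime_power (q : nat) : Prop :=
  exists p k : nat, prime p /\ (0 < k)%N /\ q = (p ^ k)%N.

(* Gaussian coefficient [m brack l]_q, valued in rat; l : int.
   For l >= 0 it is prod_{t=1}^{l} (q^(m-t+1) - 1)/(q^t - 1); 0 for l < 0.
   (For l > m the factor t = m+1 is q^0 - 1 = 0.) *)
Definition gauss (q m : nat) (l : int) : rat :=
  if (l < 0)%R then 0
  else \prod_(1 <= t < `|l|%N.+1)
         (((q%:R : rat) ^+ (m.+1 - t) - 1) / ((q%:R : rat) ^+ t - 1)).

Definition Tterm (q n d i j h : nat) : rat :=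
  (-1) ^+ (i - h) * (q%:R : rat) ^+ (j * (j + h - i) + 'C(i - h, 2))
  * gauss q i h%:Z * gauss q (d - h) j%:Z
  * gauss q (n - d - i + h) (n - d - j)%:Z.

(* lower and upper summation bounds max{0,i-j}, min{i,d-j} *)
Definition hlo (i j : nat) : nat := (i - j)%N.
Definition hmax (d i j : nat) : nat := minn i (d - j).

Definition T (q n d i j : nat) (h : int) : rat :=
  if ((hlo i j)%:Z <= h) && (h <= (hmax d i j)%:Z)
  then Tterm q n d i j `|h|%N else 0.

Definition G (q n d j i : nat) : rat :=
  \sum_(hlo i j <= h < (hmax d i j).+1) Tterm q n d i j h.

(* Main.v *)
Require Import Defs.
From mathcomp Require Import all_boot all_order all_algebra.
From mathcomp Require Import zify ring lra.
Import Order.TTheory GRing.Theory Num.Theory.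
Local Open Scope ring_scope.
Lemma key_ineq (x : rat) (u w k s h : nat) : 2 <= x -> (3 <= x \/ (1 <= k)%N) ->
  (x ^+ h - 1) * (x ^+ (w + s + u + 1) - 1) * (x ^+ s - 1)
  <= x ^+ s * ((x ^+ (u + 1) - 1) * (x ^+ (w + 1) - 1) * (x ^+ (w + h + s + k) - 1)).
Proof.
move=> x2 hk.
have x1 : 1 <= x by lra.
have ge1 : forall t, 1 <= x ^+ t by move=> t; apply: exprn_ege1.
set P := x ^+ u; set W := x ^+ w; set S := x ^+ s; set H := x ^+ h; set K := x ^+ k.
have P1 : 1 <= P := ge1 u. have W1 : 1 <= W := ge1 w. have S1 : 1 <= S := ge1 s.
have H1 : 1 <= H := ge1 h. have K1 : 1 <= K := ge1 k.
have -> : x ^+ (w + s + u + 1) = W * S * P * x by rewrite !exprD expr1.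
have -> : x ^+ (u + 1) = P * x by rewrite exprD expr1.
have -> : x ^+ (w + 1) = W * x by rewrite exprD expr1.
have -> : x ^+ (w + h + s + k) = W * H * S * K by rewrite !exprD.
have F2 : x * P * W <= K * ((P * x - 1) * (W * x - 1)).
  case: hk => [x3|k1].
    have : x * P * W <= (P * x - 1) * (W * x - 1).
      rewrite -subr_ge0.
      have : 0 <= (P - 1) * (W - 1) by apply: mulr_ge0; lra.
      have : 0 <= P * W * (x - 3) by apply: mulr_ge0; [apply: mulr_ge0; lra | lra].
      have : 1 <= P * W by rewrite -[1]mulr1; apply: ler_pM; lra.
      nra.
    move=> h1; apply: (le_trans h1).
    have : 0 <= (P * x - 1) * (W * x - 1) by apply: mulr_ge0; nra.
    nra.
  have Kx : x <= K by rewrite /K -(prednK k1) exprS; have := ge1 k.-1; nra.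
  have a1 : P <= P * x - 1 by nra.
  have a2 : W <= W * x - 1 by nra.
  have : P * W <= (P * x - 1) * (W * x - 1) by apply: ler_pM; lra.
  have : 0 <= P * W by apply: mulr_ge0; lra.
  nra.
have E1 : W * S * K * (H - 1) <= W * H * S * K - 1.
  have : 1 <= W * S * K by rewrite -[1]mulr1 ler_pM // ?mulr_ge0 //; try lra;
    rewrite -[1]mulr1 ler_pM //; lra.
  move=> h1; have -> : W * H * S * K - 1 = W * S * K * (H - 1) + (W * S * K - 1) by ring.
  lra.
have nn : 0 <= S * ((P * x - 1) * (W * x - 1)) by apply: mulr_ge0; [lra | apply: mulr_ge0; nra].
apply: (@le_trans _ _ (S * ((P * x - 1) * (W * x - 1)) * (W * S * K * (H - 1)))); last first.
  have -> : S * ((P * x - 1) * (W * x - 1) * (W * H * S * K - 1)) = S * ((P * x - 1) * (W * x - 1)) * (W * H * S * K - 1) by ring.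
  by apply: ler_wpM2l.
have -> : S * ((P * x - 1) * (W * x - 1)) * (W * S * K * (H - 1))
  = (H - 1) * (S * S * W) * (K * ((P * x - 1) * (W * x - 1))) by ring.
apply: (@le_trans _ _ ((H - 1) * (S * S * W) * (x * P * W))); last first.
  apply: ler_wpM2l => //; apply: mulr_ge0; [lra | apply: mulr_ge0; [apply: mulr_ge0|]; lra].
set Y := W * S * P * x.
have Y0 : 0 <= Y by rewrite /Y; apply: mulr_ge0; [apply: mulr_ge0; [apply: mulr_ge0|]|]; lra.
have -> : (H - 1) * (S * S * W) * (x * P * W) = (H - 1) * (S * Y * W) by rewrite /Y; ring.
have -> : (H - 1) * (Y - 1) * (S - 1) = (H - 1) * ((S - 1) * (Y - 1)) by ring.
apply: ler_wpM2l; first lra.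
have : S * Y <= S * Y * W by rewrite -{1}[S * Y]mulr1; apply: ler_wpM2l => //; apply: mulr_ge0; lra.
nra.
Qed.
Lemma gauss_nat q m l : gauss q m l%:Z =
  \prod_(1 <= t < l.+1) (((q%:R : rat) ^+ (m.+1 - t) - 1) / ((q%:R : rat) ^+ t - 1)).
Proof. by rewrite /gauss ltNge lez_nat /=. Qed.

Lemma gauss_S q m l : gauss q m (l.+1)%:Z = gauss q m l%:Z *
  (((q%:R : rat) ^+ (m - l) - 1) / ((q%:R : rat) ^+ l.+1 - 1)).
Proof. by rewrite !gauss_nat big_nat_recr. Qed.

Lemma gauss_ge0 q m l : (1 <= q)%N -> 0 <= gauss q m l.
Proof.
move=> q1; rewrite /gauss; case: ifP => // _.
apply: prodr_ge0 => t _; apply: divr_ge0; rewrite subr_ge0 exprn_ege1 // ler1n //.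
Qed.

Lemma gauss_up q M j : (j <= M)%N ->
  gauss q M.+1 j%:Z * ((q%:R : rat) ^+ (M.+1 - j) - 1)
  = gauss q M j%:Z * ((q%:R : rat) ^+ M.+1 - 1).
Proof.
elim: j => [|j IH] jM.
  by rewrite !gauss_nat !big_geq // subn0.
rewrite !gauss_S.
set x := (q%:R : rat).
have -> : (M.+1 - j.+1 = M - j)%N by [].
have -> : (M.+1 - j = (M - j).+1)%N by lia.
have IH' := IH (ltnW jM).
rewrite (_ : (M.+1 - j = (M - j).+1)%N) in IH'; last by lia.
transitivity (gauss q M.+1 j * (x ^+ (M - j).+1 - 1) * ((x ^+ (M - j) - 1) / (x ^+ j.+1 - 1))); first by ring.
by rewrite IH'; ring.
Qed.
Definition altsum (a : nat -> rat) m := \sum_(0 <= k < m.+1) (-1) ^+ (m - k) * a k.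

Lemma altsumS a m : altsum a m.+1 = a m.+1 - altsum a m.
Proof.
rewrite /altsum big_nat_recr //= subnn expr0 mul1r addrC; congr (_ + _).
rewrite -sumrN; apply: eq_big_nat => k /andP [_ km].
by rewrite subSn // exprS mulN1r mulNr.
Qed.

Lemma alt_bounds (a : nat -> rat) m : 0 <= a 0%N ->
  (forall k, (k < m)%N -> a k <= a k.+1) ->
  [/\ 0 <= altsum a m, altsum a m <= a m &
      a m - (if m is m'.+1 then a m' else 0) <= altsum a m].
Proof.
move=> a0; elim: m => [|m IH] mono.
  by rewrite /altsum big_nat1 subnn expr0 mul1r subr0; split.
have [h1 h2 h3] := IH (fun k km => mono k (ltnW (leq_trans km (leqnn _)))).
have := mono m (ltnSn m).
rewrite altsumS; move=> hm; split; lra.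
Qed.

Definition Q (q n d i j h : nat) : rat :=
  (q%:R : rat) ^+ (j * (j + h - i) + 'C(i - h, 2)) * gauss q i h%:Z
  * gauss q (d - h) j%:Z * gauss q (n - d - i + h) (n - d - j)%:Z.

Lemma Tterm_Q q n d i j h : Tterm q n d i j h = (-1) ^+ (i - h) * Q q n d i j h.
Proof. by rewrite /Tterm /Q !mulrA. Qed.

Lemma Q_ge0 q n d i j h : (1 <= q)%N -> 0 <= Q q n d i j h.
Proof.
move=> q1; rewrite /Q; repeat apply: mulr_ge0; rewrite ?gauss_ge0 //.
by apply: exprn_ge0; rewrite ler0n.
Qed.

Lemma pos_pow (q t : nat) : (2 <= q)%N -> (0 < t)%N -> 0 < (q%:R : rat) ^+ t - 1.
Proof.
move=> q2 t0; rewrite subr_gt0 -(prednK t0) exprS.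
have x2 : 2 <= (q%:R : rat) by rewrite (ler_nat _ 2).
have := exprn_ege1 t.-1 (le_trans (ler_nat _ 1 2) x2). nra.
Qed.

Lemma gauss_up' q M j : (2 <= q)%N -> (j <= M)%N ->
  gauss q M.+1 j%:Z = gauss q M j%:Z *
   (((q%:R : rat) ^+ M.+1 - 1) / ((q%:R : rat) ^+ (M.+1 - j) - 1)).
Proof.
move=> q2 jM; have p : 0 < (q%:R : rat) ^+ (M.+1 - j) - 1 by apply: pos_pow => //; lia.
apply: (mulIf (lt0r_neq0 p)) => /=.
by rewrite gauss_up // -mulrA divfK // lt0r_neq0.
Qed.

Lemma expo i j h : (i - j <= h)%N -> (h < i)%N ->
  (j * (j + h.+1 - i) + 'C(i - h.+1, 2) = j * (j + h - i) + 'C(i - h, 2) + (j + h.+1 - i))%N.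
Proof.
move=> h1 h2.
have -> : (i - h = (i - h.+1).+1)%N by lia.
rewrite binS bin1.
have -> : (j + h.+1 - i = (j + h - i).+1)%N by lia.
rewrite mulnS; lia.
Qed.

Lemma Q_mono q n d i j h : (2 <= q)%N -> ((3 <= q)%N \/ (2 * d < n)%N) -> (2 * d <= n)%N ->
  (i <= d)%N -> (j <= d)%N -> (i - j <= h)%N -> (h.+1 <= minn i (d - j))%N ->
  Q q n d i j h <= Q q n d i j h.+1.
Proof.
move=> q2 hc hn hi hj hl hu.
have hu1 : (h.+1 <= i)%N by move: hu; rewrite leq_min => /andP[].
have hu2 : (h.+1 <= d - j)%N by move: hu; rewrite leq_min => /andP[].
rewrite /Q.
set x := (q%:R : rat).
have x2 : 2 <= x by rewrite /x (ler_nat _ 2).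
rewrite expo // gauss_S.
set E := (j * (j + h - i) + _)%N.
have -> : (d - h = (d - h.+1).+1)%N by lia.
rewrite gauss_up' //; last by lia.
have -> : (n - d - i + h.+1 = (n - d - i + h).+1)%N by lia.
rewrite gauss_up' //; last by lia.
have -> : ((n - d - i + h).+1 - (n - d - j) = j + h.+1 - i)%N by lia.
set g1 := gauss q i h; set g2 := gauss q (d - h.+1) j; set g3 := gauss q (n - d - i + h) _.
set s := (j + h.+1 - i)%N.
rewrite exprD.
set u := (i - h.+1)%N. set w := (d - h.+1 - j)%N. set k := (n - 2 * d)%N.
have ea : (i - h = u + 1)%N by rewrite /u; lia.
have eb : ((d - h.+1).+1 - j = w + 1)%N by rewrite /w; lia.
have ec : ((d - h.+1).+1 = w + s + u + 1)%N by rewrite /w /s /u; lia.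
have ee : ((n - d - i + h).+1 = w + h.+1 + s + k)%N by rewrite /w /s /k; lia.
rewrite ea eb ec ee.
have s1 : (0 < s)%N by rewrite /s; lia.
have pH := @pos_pow q h.+1 q2 (ltn0Sn h).
have pS := @pos_pow q s q2 s1.
have pB := @pos_pow q (w + 1) q2 (ltac:(lia)).
have G0 : 0 <= g1 * g2 * g3 by rewrite !mulr_ge0 // gauss_ge0 //; lia.
have XE : 0 <= x ^+ E by apply: exprn_ge0; lra.
have key := @key_ineq x u w k s h.+1 x2.
have kc : 3 <= x \/ (1 <= k)%N.
  case: hc => [h3|h3]; [left; rewrite /x (ler_nat _ 3) // | right; rewrite /k; lia].
have {}key := key kc.
set A := x ^+ (u + 1) - 1. set B := x ^+ (w + 1) - 1. set C := x ^+ (w + s + u + 1) - 1.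
set Ee := x ^+ (w + h.+1 + s + k) - 1. set H := x ^+ h.+1 - 1. set S := x ^+ s - 1.
fold A B C Ee H S in key.
have -> : x ^+ E * g1 * (g2 * (C / B)) * g3 = (g1 * g2 * g3) * (x ^+ E * ((H * C * S) / (H * S * B))).
  by field; rewrite !lt0r_neq0.
have -> : x ^+ E * x ^+ s * (g1 * (A / H)) * g2 * (g3 * (Ee / S))
   = (g1 * g2 * g3) * (x ^+ E * ((x ^+ s * (A * B * Ee)) / (H * S * B))).
  by field; rewrite !lt0r_neq0.
apply: ler_wpM2l => //; apply: ler_wpM2l => //.
apply: ler_wpM2r => //.
by rewrite invr_ge0 !mulr_ge0 // ltW.
Qed.

Theorem lemma3p1 (q n d : nat) :
  prime_power q -> (1 <= d)%N -> (2 * d <= n)%N -> ~ (n = (2 * d)%N /\ q = 2%N) ->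
  forall i j : nat, (i <= d)%N -> (j <= d)%N ->
    `|T q n d i j (hmax d i j)%:Z| - `|T q n d i j ((hmax d i j)%:Z - 1)|
      <= `|G q n d j i| /\
    `|G q n d j i| <= `|T q n d i j (hmax d i j)%:Z|.
Proof.
move=> [p [e [pp [e0 qe]]]] d1 hn hne i j hid hj.
have q2 : (2 <= q)%N.
  rewrite qe -(prednK e0) expnS; have := expn_gt0 p e.-1; have := prime_gt1 pp.
  rewrite (prime_gt0 pp) /=; nia.
have hc : ((3 <= q)%N \/ (2 * d < n)%N) by lia.
set lo := hlo i j; set hi := hmax d i j.
have lohi : (lo <= hi)%N by rewrite /lo /hi /hlo /hmax leq_min; apply/andP; split; lia.
set m := (hi - lo)%N.
pose a k := Q q n d i j (k + lo).
have a0 : 0 <= a 0%N by apply: Q_ge0; lia.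
have amono : forall k, (k < m)%N -> a k <= a k.+1.
  move=> k km; rewrite /a addSn; apply: Q_mono => //.
    by rewrite /lo /hlo; lia.
  rewrite -/(hmax d i j) -/hi; lia.
have [b1 b2 b3] := @alt_bounds a m a0 amono.
have GE : G q n d j i = (-1) ^+ (i - hi) * altsum a m.
  rewrite /G -/lo -/hi -{1}(add0n lo) big_addn subSn // -/m /altsum big_distrr /=.
  apply: eq_big_nat => k /andP [_ km]; rewrite Tterm_Q mulrA -exprD /a.
  have hih : (hi <= i)%N by rewrite /hi /hmax geq_minl.
  congr (_ ^+ _ * _); rewrite /m in km; lia.
have normG : `|G q n d j i| = altsum a m.
  by rewrite GE normrM normrX normrN1 expr1n mul1r ger0_norm.
have Thi : `|T q n d i j hi%:Z| = a m.
  rewrite /T -/lo -/hi !lez_nat lohi leqnn /= Tterm_Q normrM normrX normrN1 expr1n mul1r.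
  by rewrite ger0_norm ?Q_ge0 /a ?subnK //; lia.
rewrite normG Thi; split => //.
have Tm : `|T q n d i j (hi%:Z - 1)| = (if m is m'.+1 then a m' else 0).
  rewrite /T -/lo -/hi; case Em : m => [|m'].
    have hl : hi = lo by rewrite /m in Em; lia.
    rewrite ifF ?normr0 // hl; apply/negbTE/nandP; left; lia.
  have hpos : (hi = (m' + lo).+1)%N by rewrite /m in Em; lia.
  have -> : hi%:Z - 1 = (m' + lo)%:Z by rewrite hpos; lia.
  rewrite !lez_nat ifT; last by apply/andP; split; lia.
  rewrite Tterm_Q normrM normrX normrN1 expr1n mul1r ger0_norm ?Q_ge0 //; lia.
by rewrite Tm.
Qed.
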